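(* There is a faithful functor $\Phi\colon\Delta R^{op}\to\mathcal{I}\Gamma(as)$, the identity on objects, such that for all $n$: $\Phi$ sends the (opposite of the) coface $\delta_i\colon[n-1]\to[n]$ ($0\leqslant i\leqslant n$) to $d_i\colon[n]\to[n-1]$, the (opposite of the) codegeneracy $\sigma_j\colon[n+1]\to[n]$ ($0\leqslant j\leqslant n$) to $s_j\colon[n]\to[n+1]$, and the (opposite of the) reflection $r_n$ of $[n]$ to $\rho_n$. Consequently $\Delta R^{op}$ is isomorphic to the subcategory $\mathcal{R}$ of $\mathcal{I}\Gamma(as)$ generated by the morphisms $d_i$, $s_j$, $\rho_n$.
   Context: Let $C_2=\{1,t\}$ and $[n]=\{0,\dots,n\}$. The category $\mathcal{IF}(as)$ has objects $[n]$; a morphism $f\colon[n]\to[m]$ is a map of sets with a total order on each fibre $f^{-1}(i)$ and a label in $C_2$ on each element of $[n]$ (written $j^\alpha$). For $S=\{j_1^{\alpha_1}<\cdots<j_r^{\alpha_r}\}$ put $1\ast S=S$, $t\ast S=\{j_r^{t\alpha_r}<\cdots<j_1^{t\alpha_1}\}$; the composite of $f\colon[n]\to[m]$, $g\colon[m]\to[p]$ has underlying map $g\circ f$ and fibres $(g\circ f)^{-1}(i)=\coprod_{j^\alpha\in g^{-1}(i)}\alpha\ast f^{-1}(j)$ (ordered disjoint union). $\mathcal{I}\Gamma(as)$ is the subcategory of morphisms with $f(0)=0$. Morphisms of $\mathcal{I}\Gamma(as)$ (all labels $1$ unless stated): for $n\geqslant1$ and $0\leqslant i\leqslant n-1$,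 $d_i\colon[n]\to[n-1]$ sends $j\mapsto j$ ($j\leqslant i$), $j\mapsto j-1$ ($j>i$), with fibre over $i$ equal to $\{i<i+1\}$; $d_n\colon[n]\to[n-1]$ sends $j\mapsto j$ ($j<n$), $n\mapsto0$, with fibre over $0$ equal to $\{n<0\}$; for $0\leqslant j\leqslant n$, $s_j\colon[n]\to[n+1]$ sends $k\mapsto k$ ($k\leqslant j$), $k\mapsto k+1$ ($k>j$), so the fibre over $j+1$ is empty; $\rho_n\colon[n]\to[n]$ sends $0\mapsto 0$ and $k\mapsto n+1-k$ for $1\leqslant k\leqslant n$, with all labels equal to $t$. The reflexive category $\Delta R$ has objects $[n]$; a morphism $[n]\to[m]$ is a pair $(\phi,g)$ with $\phi\colon[n]\to[m]$ order-preserving and $g\in\{1,r_n\}$, where $r_n(i)=n-i$; composition is $(\psi,1)\circ(\phi,g)=(\psi\circ\phi,g)$ and $(\psi,r_m)\circ(\phi,g)=(\psi\circ\phi',r_ng)$ where $\phi'(i)=m-\phi(n-i)$; $r_n^2=1$. Here $\delta_i\colon[n-1]\to[n]$ is the order-preserving injection missing $i$, $\sigma_j\colon[n+1]\to[n]$ the order-preserving surjection with $\sigma_j(j)=\sigma_j(j+1)=j$, both regarded as $(\delta_i,1)$, $(\sigma_j,1)$, and the reflection is $(\mathrm{id},r_n)$. *)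

(* Defs.v *)
(* Objects [n] = {0,...,n} are modelled by 'I_n.+1. *)
From mathcomp Require Import all_boot.
Set Implicit Arguments. Unset Strict Implicit. Unset Printing Implicit Defensive.

(* The category IF(as).  A morphism [n] -> [m]: underlying map, the    *)
(* ordered fibre over each i in [m] (as a sequence), and a label in    *)
(* C2 = {1,t} for each element of [n] (false = 1, true = t).           *)
Record IFhom (n m : nat) := IFHom {
  ifmap : {ffun 'I_n.+1 -> 'I_m.+1};
  iffib : {ffun 'I_m.+1 -> seq 'I_n.+1};
  iflab : {ffun 'I_n.+1 -> bool} }.

Definition IFvalid n m (f : IFhom n m) : Prop :=
  forall i : 'I_m.+1, uniq (iffib f i) /\
    forall j : 'I_n.+1, (j \in iffib f i) = (ifmap f j == i).

Definition IGvalid n m (f : IFhom n m) : Prop :=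
  IFvalid f /\ ifmap f ord0 = ord0.

Definition IFid n : IFhom n n :=
  IFHom [ffun i => i] [ffun i => [:: i]] [ffun _ => false].

Definition star n (alpha : bool) (S : seq 'I_n.+1) : seq 'I_n.+1 :=
  if alpha then rev S else S.

Definition IFcomp n m p (f : IFhom n m) (g : IFhom m p) : IFhom n p :=
  IFHom [ffun k => ifmap g (ifmap f k)]
        [ffun i => flatten [seq star (iflab g j) (iffib f j) | j <- iffib g i]]
        [ffun k => iflab g (ifmap f k) (+) iflab f k].

Definition natfib n m (f : 'I_n.+1 -> 'I_m.+1) : {ffun 'I_m.+1 -> seq 'I_n.+1} :=
  [ffun i => [seq j <- enum 'I_n.+1 | f j == i]].

Definition dmap k (i : 'I_k.+2) (j : 'I_k.+2) : 'I_k.+1 :=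
  if i == ord_max then (if j == ord_max then ord0 else inord j)
  else inord (if j <= i then val j else (val j).-1).

Definition dface k (i : 'I_k.+2) : IFhom k.+1 k :=
  IFHom [ffun j => dmap i j]
        (if i == ord_max then
           [ffun l => if l == ord0 then [:: ord_max; ord0] else natfib (dmap i) l]
         else natfib (dmap i))
        [ffun _ => false].

Definition smap n (j : 'I_n.+1) (k : 'I_n.+1) : 'I_n.+2 := lift (lift ord0 j) k.

Definition sdeg n (j : 'I_n.+1) : IFhom n n.+1 :=
  IFHom [ffun k => smap j k] (natfib (smap j)) [ffun _ => false].

Definition rhomap n (k : 'I_n.+1) : 'I_n.+1 :=
  if k == ord0 then ord0 else inord (n.+1 - k).

Definition rho n : IFhom n n :=
  IFHom [ffun k => rhomap k] (natfib (@rhomap n)) [ffun _ => true].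

Inductive Rgen : forall n m, IFhom n m -> Prop :=
  | Rgen_id n : Rgen (IFid n)
  | Rgen_d k (i : 'I_k.+2) : Rgen (dface i)
  | Rgen_s n (j : 'I_n.+1) : Rgen (sdeg j)
  | Rgen_rho n : Rgen (rho n)
  | Rgen_comp n m p (f : IFhom n m) (g : IFhom m p) :
      Rgen f -> Rgen g -> Rgen (IFcomp f g).

(* The reflexive category ΔR.  A morphism [n] -> [m] is (phi, g) with  *)
(* phi order preserving and g in {1, r_n} (drrev = true means r_n).    *)
Record DRhom (n m : nat) := DRHom {
  drphi : {ffun 'I_n.+1 -> 'I_m.+1};
  drrev : bool }.

Definition DRvalid n m (x : DRhom n m) : Prop :=
  forall i j : 'I_n.+1, i <= j -> drphi x i <= drphi x j.

Definition DRid n : DRhom n n := DRHom [ffun i => i] false.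

Definition DRcomp n m p (y : DRhom m p) (x : DRhom n m) : DRhom n p :=
  if drrev y then
    DRHom [ffun i => drphi y (rev_ord (drphi x (rev_ord i)))] (~~ drrev x)
  else DRHom [ffun i => drphi y (drphi x i)] (drrev x).

Definition delta k (i : 'I_k.+2) : DRhom k k.+1 := DRHom [ffun j => lift i j] false.

Definition sigma n (j : 'I_n.+1) : DRhom n.+1 n :=
  DRHom [ffun k : 'I_n.+2 => inord (unbump j k)] false.

Definition refl n : DRhom n n := DRHom [ffun i => i] true.

(* Main.v *)
Require Import Defs.
From mathcomp Require Import all_boot zify.
Set Implicit Arguments. Unset Strict Implicit. Unset Printing Implicit Defensive.

Definition liftf a b (phi : {ffun 'I_a.+1 -> 'I_b.+1}) (x : nat) : nat :=
  phi (inord (x %% a.+1)) + (x %/ a.+1) * b.+1.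

Definition flI a b (phi : {ffun 'I_a.+1 -> 'I_b.+1}) (x : nat) : seq nat :=
  [seq z %% b.+1 | z <- iota (liftf phi x).+1 (liftf phi x.+1 - liftf phi x)].

Definition fl a b (phi : {ffun 'I_a.+1 -> 'I_b.+1}) (l : nat) : seq nat := flI phi (l + a).

Definition monof a b (phi : {ffun 'I_a.+1 -> 'I_b.+1}) :=
  forall i j : 'I_a.+1, i <= j -> phi i <= phi j.

Section Lift.
Variables a b : nat.
Implicit Type phi : {ffun 'I_a.+1 -> 'I_b.+1}.

Lemma liftf_eq phi r q : r < a.+1 -> liftf phi (r + q * a.+1) = phi (inord r) + q * b.+1.
Proof.
move=> hr; rewrite /liftf [r + _]addnC modnMDl divnMDl // (modn_small hr) (divn_small hr) addn0.
by [].
Qed.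

Lemma liftf_dec phi x : liftf phi x = phi (inord (x %% a.+1)) + (x %/ a.+1) * b.+1.
Proof. by []. Qed.

Lemma liftf_per phi x q : liftf phi (x + q * a.+1) = liftf phi x + q * b.+1.
Proof.
have ex : x = x %% a.+1 + x %/ a.+1 * a.+1 by rewrite addnC -divn_eq.
rewrite ex -addnA -mulnDl !liftf_eq ?ltn_pmod // mulnDl; lia.
Qed.

Lemma liftf_step phi x : monof phi -> liftf phi x <= liftf phi x.+1.
Proof.
move=> hm; rewrite (divn_eq x a.+1).
set q := x %/ a.+1; set r := x %% a.+1.
have hr : r < a.+1 by rewrite ltn_pmod.
rewrite addnC liftf_eq //.
have [ra|ra] := ltnP r a.
  rewrite -addSn liftf_eq //; rewrite leq_add2r; apply: hm.
  by rewrite !inordK //; lia.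
have -> : (r + q * a.+1).+1 = 0 + q.+1 * a.+1 by rewrite mulSn; lia.
rewrite liftf_eq // mulSn.
have := ltn_ord (phi (inord r)); lia.
Qed.

Lemma liftf_mono phi x y : monof phi -> x <= y -> liftf phi x <= liftf phi y.
Proof.
move=> hm; apply: (homo_leq (r := leq)) => //; first by move=> ???; apply: leq_trans.
by move=> i; apply: liftf_step.
Qed.

Lemma liftf_lt phi x : liftf phi x < (x %/ a.+1).+1 * b.+1.
Proof. rewrite /liftf mulSn; have := ltn_ord (phi (inord (x %% a.+1))); lia. Qed.

End Lift.

Lemma liftf_comp a b c (phi : {ffun 'I_a.+1 -> 'I_b.+1}) (psi : {ffun 'I_b.+1 -> 'I_c.+1}) x :
  liftf psi (liftf phi x) = liftf [ffun i => psi (phi i)] x.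
Proof.
rewrite (divn_eq x a.+1) addnC liftf_eq ?ltn_pmod // liftf_eq ?ltn_ord // liftf_eq ?ltn_pmod //.
by rewrite inord_val ffunE.
Qed.

Lemma mapmod_small M s c : s + c <= M -> [seq z %% M | z <- iota s c] = iota s c.
Proof.
move=> h; rewrite -[RHS]map_id; apply/eq_in_map => z; rewrite mem_iota => hz.
apply: modn_small; lia.
Qed.

Lemma mapmod_shift M s c q : [seq z %% M | z <- iota (s + q * M) c] = [seq z %% M | z <- iota s c].
Proof.
rewrite addnC iotaDl -map_comp; apply: eq_map => z /=.
by rewrite modnMDl.
Qed.

Section Fl.
Variables a b : nat.
Implicit Type phi : {ffun 'I_a.+1 -> 'I_b.+1}.

Lemma fl_pos phi l : 0 < l <= a ->
  fl phi l = iota (phi (inord l.-1)).+1 (phi (inord l) - phi (inord l.-1)).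
Proof.
move=> hl; rewrite /fl /flI.
have -> : l + a = l.-1 + 1 * a.+1 by lia.
have -> : (l.-1 + 1 * a.+1).+1 = l + 1 * a.+1 by lia.
rewrite !liftf_eq; try lia.
rewrite subnDr -addSn mapmod_shift mapmod_small //.
have := ltn_ord (phi (inord l)); have := ltn_ord (phi (inord l.-1)); lia.
Qed.

Lemma fl_0 phi : fl phi 0 =
  iota (phi (inord a)).+1 (b - phi (inord a)) ++ iota 0 (phi (inord 0)).+1.
Proof.
rewrite /fl /flI.
have -> : 0 + a = a + 0 * a.+1 by lia.
have -> : (a + 0 * a.+1).+1 = 0 + 1 * a.+1 by lia.
rewrite !liftf_eq // mul0n addn0 mul1n.
have h1 := ltn_ord (phi (inord a)).
have -> : phi (inord 0) + b.+1 - phi (inord a) = (b - phi (inord a)) + (phi (inord 0)).+1 by lia.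
rewrite iotaD map_cat mapmod_small; last by lia.
congr (_ ++ _).
have e : (phi (inord a)).+1 + (b - phi (inord a)) = 0 + 1 * b.+1 by rewrite add0n mul1n; lia.
rewrite e mapmod_shift mapmod_small //; have := ltn_ord (phi (inord 0)); lia.
Qed.

Lemma fl_mem phi l k : l <= a -> k < b.+1 ->
  (k \in fl phi l) = (if l == 0 then (phi (inord a) < k) || (k <= phi (inord 0))
                      else (phi (inord l.-1) < k <= phi (inord l))).
Proof.
move=> hl hk; case: eqP => [->|l0].
  by rewrite fl_0 mem_cat !mem_iota; apply/orP/orP => -[] h; [left|right|left|right]; lia.
by rewrite fl_pos ?mem_iota; lia.
Qed.

Lemma fl_lt phi l z : z \in fl phi l -> z < b.+1.
Proof. by case/mapP => y _ ->; rewrite ltn_pmod. Qed.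

Lemma fl_uniq phi l : monof phi -> l <= a -> uniq (fl phi l).
Proof.
move=> hm hl; case: (posnP l) => [->|lp]; last by rewrite fl_pos ?iota_uniq //; lia.
rewrite fl_0 cat_uniq !iota_uniq andbT andTb.
have : phi (inord 0) <= phi (inord a) by apply: hm; rewrite !inordK //.
move=> h; apply/hasPn => z; rewrite !mem_iota; lia.
Qed.

End Fl.

Definition Pmapn a b (phi : {ffun 'I_a.+1 -> 'I_b.+1}) (k : nat) : nat :=
  let c := find (fun l => k <= phi (inord l)) (iota 0 a.+1) in if c == a.+1 then 0 else c.

Definition P a b (phi : {ffun 'I_a.+1 -> 'I_b.+1}) : IFhom b a :=
  IFHom [ffun k : 'I_b.+1 => inord (Pmapn phi k)]
        [ffun l : 'I_a.+1 => map inord (fl phi l)] [ffun _ => false].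

Definition IFmem n m (f : IFhom n m) :=
  forall i j, (j \in iffib f i) = (ifmap f j == i).

Lemma inord_eqE n x (i : 'I_n.+1) : x <= n -> (inord x == i) = (x == val i).
Proof. by move=> h; rewrite -(inj_eq val_inj) /= inordK. Qed.

Lemma mem_map_inord n (s : seq nat) (j : 'I_n.+1) :
  (forall z, z \in s -> z < n.+1) -> (j \in map (@inord n) s) = (val j \in s).
Proof.
move=> h; apply/mapP/idP => [[z hz ->]|hj]; first by rewrite /= inordK ?h.
by exists (val j); rewrite ?inord_val.
Qed.

Section PS.
Variables a b : nat.
Implicit Type phi : {ffun 'I_a.+1 -> 'I_b.+1}.

Lemma Pmapn_le phi k : Pmapn phi k <= a.
Proof.
rewrite /Pmapn; case: eqP => // h.
have := find_size (fun l => k <= phi (inord l)) (iota 0 a.+1).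
rewrite size_iota; lia.
Qed.

Lemma Pmapn_in phi k : k < b.+1 -> k \in fl phi (Pmapn phi k).
Proof.
move=> hk; rewrite /Pmapn.
set c := find _ _.
have hc : c <= a.+1 by rewrite -[a.+1](size_iota 0) find_size.
case: eqP => [ec|nc].
  rewrite fl_mem //.
  have : ~~ has (fun l => k <= phi (inord l)) (iota 0 a.+1).
    by rewrite has_find size_iota -/c ec ltnn.
  move/hasPn => /(_ a); rewrite mem_iota /= => /(_ (leqnn _)).
  by rewrite -ltnNge => ->.
have hca : c < a.+1 by lia.
rewrite fl_mem; try lia.
have h1 : k <= phi (inord c).
  have := @nth_find _ 0 (fun l => k <= phi (inord l)) (iota 0 a.+1).
  rewrite has_find size_iota -/c nth_iota // add0n; by apply.
case: eqP => [c0|c0].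
  by rewrite -c0 h1 orbT.
rewrite h1 andbT ltnNge.
have := @before_find _ 0 (fun l => k <= phi (inord l)) (iota 0 a.+1) c.-1.
rewrite nth_iota ?add0n; last by lia.
move=> ->; lia.
Qed.

Lemma fl_unique phi k l1 l2 : monof phi -> k < b.+1 -> l1 <= a -> l2 <= a ->
  k \in fl phi l1 -> k \in fl phi l2 -> l1 = l2.
Proof.
move=> hm hk h1 h2.
have mono : forall x y, x <= y -> y <= a -> phi (inord x) <= phi (inord y).
  by move=> x y hxy hy; apply: hm; rewrite !inordK //; lia.
wlog lt12 : l1 l2 h1 h2 / l1 < l2.
  move=> W; case: (ltngtP l1 l2) => [lt|gt|->] //.
    by apply: W.
  by move=> m1 m2; symmetry; apply: W.
rewrite !fl_mem //; case: eqP => [e1|ne1]; case: eqP => [e2|ne2]; try lia.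
  move=> A /andP [B C]; have := mono _ _ (leq0n l2.-1) (leq_trans (leq_pred _) h2).
  have := mono _ _ h2 (leqnn a); lia.
move=> /andP [A B] /andP [C D].
have := mono l1 l2.-1 ltac:(lia) ltac:(lia); lia.
Qed.

Lemma Pmapn_spec phi k l : monof phi -> k < b.+1 -> l <= a ->
  (Pmapn phi k == l) = (k \in fl phi l).
Proof.
move=> hm hk hl; apply/eqP/idP => [<-|h]; first exact: Pmapn_in.
apply: (fl_unique hm hk (Pmapn_le _ _) hl) => //; exact: Pmapn_in.
Qed.

Lemma P_mem phi : monof phi -> IFmem (P phi).
Proof.
move=> hm i j; rewrite /= !ffunE mem_map_inord; last by move=> z; apply: fl_lt.
have hi : val i <= a by rewrite -ltnS ltn_ord.
by rewrite inord_eqE ?Pmapn_le // (Pmapn_spec hm (ltn_ord j) hi).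
Qed.

Lemma Pmapn0 phi : Pmapn phi 0 = 0.
Proof. rewrite /Pmapn. have -> : find (fun l => 0 <= phi (inord l)) (iota 0 a.+1) = 0 by []. by []. Qed.

Lemma P_uniq phi i : monof phi -> uniq (iffib (P phi) i).
Proof.
move=> hm; have hi : val i <= a by rewrite -ltnS ltn_ord.
rewrite /= ffunE map_inj_in_uniq ?fl_uniq //.
move=> x y hx hy /(congr1 val); rewrite /= !inordK //.
all: by [apply: (fl_lt hx) | apply: (fl_lt hy)].
Qed.

End PS.

Lemma IFhomE n m (f : IFhom n m) : f = IFHom (ifmap f) (iffib f) (iflab f).
Proof. by case: f. Qed.

Lemma mem_star n b (s : seq 'I_n.+1) x : (x \in star b s) = (x \in s).
Proof. by case: b; rewrite /star ?mem_rev. Qed.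

Lemma IFmem_comp n m p (f : IFhom n m) (g : IFhom m p) :
  IFmem f -> IFmem g -> IFmem (IFcomp f g).
Proof.
move=> hf hg i k; rewrite /IFcomp /= !ffunE.
apply/flatten_mapP/eqP => [[l hl]|<-].
  by move: hl; rewrite hg => /eqP <-; rewrite mem_star hf => /eqP ->.
by exists (ifmap f k); rewrite ?mem_star ?hf ?hg.
Qed.

Lemma IFmem_map n m (f g : IFhom n m) : IFmem f -> IFmem g -> iffib f = iffib g ->
  ifmap f = ifmap g.
Proof.
move=> hf hg E; apply/ffunP => k; apply/eqP.
by rewrite eq_sym -hg -E hf.
Qed.

Lemma flatten_flatten T (sss : seq (seq (seq T))) :
  flatten (flatten sss) = flatten (map flatten sss).
Proof. by elim: sss => //= ss sss IH; rewrite flatten_cat IH. Qed.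

Lemma IFcomp_assoc n m p q (f : IFhom n m) (g : IFhom m p) (h : IFhom p q) :
  IFmem g -> IFcomp (IFcomp f g) h = IFcomp f (IFcomp g h).
Proof.
move=> hg; rewrite /IFcomp /=; congr IFHom; apply/ffunP => x; rewrite !ffunE //.
- under eq_map => j do rewrite ffunE.
  rewrite map_flatten flatten_flatten -!map_comp; congr flatten; apply: eq_map => j /=.
  have E : {in star (iflab h j) (iffib g j), forall l,
     star ([ffun k => iflab h (ifmap g k) (+) iflab g k] l) (iffib f l) =
     star (iflab h j (+) iflab g l) (iffib f l)}.
    move=> l; rewrite mem_star hg => /eqP <-; by rewrite ffunE.
  rewrite (_ : map _ (star _ _) = map (fun l => star (iflab h j (+) iflab g l) (iffib f l))
     (star (iflab h j) (iffib g j))); last exact/eq_in_map.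
  case: (iflab h j) => /=; last first.
    by congr flatten; apply: eq_map => l.
  rewrite rev_flatten /star map_rev; congr flatten; congr rev.
  by rewrite -map_comp; apply: eq_map => l /=; case: (iflab g l) => //=; rewrite revK.
- by rewrite addbA.
Qed.

Lemma IFcomp_id_r n m (f : IFhom n m) : IFcomp f (IFid m) = f.
Proof.
rewrite [RHS]IFhomE /IFcomp /=; congr IFHom; apply/ffunP => x; rewrite !ffunE //=.
by rewrite ffunE cats0.
Qed.

Lemma IFcomp_id_l n m (g : IFhom n m) : IFcomp (IFid n) g = g.
Proof.
rewrite [RHS]IFhomE /IFcomp /=; congr IFHom; apply/ffunP => x; rewrite !ffunE //=.
- rewrite -[RHS]flatten_seq1; congr flatten; apply: eq_map => j.
  by rewrite ffunE; case: (iflab g j).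
- by rewrite addbF.
Qed.

Lemma natfib_mem n m (f : 'I_n.+1 -> 'I_m.+1) i j : (j \in natfib f i) = (f j == i).
Proof. by rewrite /natfib ffunE mem_filter mem_enum andbT. Qed.

Lemma rhomap_val n (k : 'I_n.+1) : val (rhomap k) = (n.+1 - k) %% n.+1.
Proof.
rewrite /rhomap; case: eqP => [->|k0]; first by rewrite subn0 modnn.
have hk : 0 < (k : nat) by rewrite lt0n; apply/eqP => h; apply: k0; apply: val_inj.
rewrite /= inordK ?modn_small //; have := ltn_ord k; lia.
Qed.

Lemma rhomapK n : involutive (@rhomap n).
Proof.
move=> k; apply: val_inj; rewrite !rhomap_val /=.
have := ltn_ord k; case: (posnP (k : nat)) => [->|kp] h.
  by rewrite subn0 modnn subn0 modnn.
rewrite (modn_small (_ : n.+1 - k < n.+1)); last by lia.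
by rewrite (_ : n.+1 - (n.+1 - k) = k) ?modn_small //; lia.
Qed.

Lemma natfib_rho n (j : 'I_n.+1) : natfib (@rhomap n) j = [:: rhomap j].
Proof.
rewrite /natfib ffunE (eq_filter (a2 := pred1 (rhomap j))).
  by rewrite filter_pred1_uniq ?enum_uniq ?mem_enum.
move=> k /=; apply/eqP/eqP => [<-|->]; by rewrite rhomapK.
Qed.

Lemma rho_mem n : IFmem (rho n).
Proof. by move=> i j; rewrite /= natfib_mem ffunE. Qed.

Lemma rho_rho n : IFcomp (rho n) (rho n) = IFid n.
Proof.
rewrite /IFcomp /IFid /=; congr IFHom; apply/ffunP => x.
- by rewrite !ffunE rhomapK.
- by rewrite ffunE natfib_rho /= ffunE natfib_rho /= rhomapK ffunE.
- by rewrite !ffunE.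
Qed.

Lemma flI_per b c (psi : {ffun 'I_b.+1 -> 'I_c.+1}) x q :
  flI psi (x + q * b.+1) = flI psi x.
Proof.
rewrite /flI -addSn !liftf_per subnDr -addSn; exact: mapmod_shift.
Qed.

Lemma fl_mod b c (psi : {ffun 'I_b.+1 -> 'I_c.+1}) z :
  fl psi (z %% b.+1) = flI psi (z + b).
Proof.
rewrite /fl {2}(divn_eq z b.+1) (_ : z %/ b.+1 * b.+1 + z %% b.+1 + b =
   z %% b.+1 + b + z %/ b.+1 * b.+1); last by lia.
by rewrite flI_per.
Qed.

Lemma tele (F : nat -> nat) s L : (forall z, F z <= F z.+1) ->
  flatten [seq iota (F z).+1 (F z.+1 - F z) | z <- iota s L] = iota (F s).+1 (F (s + L) - F s).
Proof.
move=> hF; have mono : forall x y, x <= y -> F x <= F y.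
  by move=> x y; apply: (homo_leq (r := leq)) => // ???; apply: leq_trans.
elim: L => [|L IH]; first by rewrite addn0 subnn.
rewrite -addn1 iotaD map_cat flatten_cat IH /= cats0.
have h1 := mono s (s + L) (leq_addr _ _).
have h2 := hF (s + L).
rewrite (_ : F (s + (L + 1)) - F s = (F (s + L) - F s) + (F (s + L).+1 - F (s + L))).
  by rewrite iotaD; congr (_ ++ iota _ _); lia.
rewrite addn1 addnS; lia.
Qed.

Lemma fl_comp a b c (phi : {ffun 'I_a.+1 -> 'I_b.+1}) (psi : {ffun 'I_b.+1 -> 'I_c.+1}) i :
  monof phi -> monof psi ->
  flatten [seq fl psi l | l <- fl phi i] = fl [ffun k => psi (phi k)] i.
Proof.
move=> hphi hpsi.
rewrite {1}/fl /flI -map_comp.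
set s := (liftf phi (i + a)).+1.
set L := liftf phi (i + a).+1 - liftf phi (i + a).
pose F := fun z => liftf psi (z + b).
have E : forall z, fl psi (z %% b.+1) = map (modn^~ c.+1) (iota (F z).+1 (F z.+1 - F z)).
  by move=> z; rewrite fl_mod.
rewrite (eq_map E) -[flatten _]/(flatten (map (fun z => map (modn^~ c.+1) (iota (F z).+1 (F z.+1 - F z))) (iota s L))).
rewrite (_ : flatten _ = map (modn^~ c.+1) (flatten [seq iota (F z).+1 (F z.+1 - F z) | z <- iota s L])); last first.
  by rewrite map_flatten -map_comp.
rewrite tele; last by move=> z; apply: liftf_mono => //; lia.
have hl := liftf_step (i + a) hphi.
have -> : s + L = (liftf phi (i + a).+1).+1 by rewrite /s /L; lia.
have Fs : forall x, F (liftf phi x).+1 = liftf [ffun k => psi (phi k)] x + c.+1.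
  move=> x; rewrite /F (_ : (liftf phi x).+1 + b = liftf phi x + 1 * b.+1); last by lia.
  by rewrite liftf_per liftf_comp mul1n.
rewrite /s !Fs subnDr -addSn.
have := mapmod_shift c.+1 (liftf [ffun k => psi (phi k)] (i + a)).+1
  (liftf [ffun k => psi (phi k)] (i + a).+1 - liftf [ffun k => psi (phi k)] (i + a)) 1.
by rewrite mul1n => ->.
Qed.

Lemma monof_comp a b c (phi : {ffun 'I_a.+1 -> 'I_b.+1}) (psi : {ffun 'I_b.+1 -> 'I_c.+1}) :
  monof phi -> monof psi -> monof [ffun k => psi (phi k)].
Proof. by move=> h1 h2 i j hij; rewrite !ffunE; apply/h2/h1. Qed.

Lemma P_comp a b c (phi : {ffun 'I_a.+1 -> 'I_b.+1}) (psi : {ffun 'I_b.+1 -> 'I_c.+1}) :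
  monof phi -> monof psi -> P [ffun k => psi (phi k)] = IFcomp (P psi) (P phi).
Proof.
move=> hphi hpsi.
have fibE : iffib (P [ffun k => psi (phi k)]) = iffib (IFcomp (P psi) (P phi)).
  apply/ffunP => i; rewrite /= !ffunE -fl_comp // -map_comp map_flatten -map_comp.
  congr flatten; apply/eq_in_map => z hz /=.
  by rewrite !ffunE /= inordK //; apply: fl_lt hz.
rewrite [LHS]IFhomE [RHS]IFhomE; congr IFHom => //.
  apply: IFmem_map => //; first by apply: P_mem; apply: monof_comp.
  by apply: IFmem_comp; apply: P_mem.
by apply/ffunP => k; rewrite !ffunE.
Qed.

Definition rflip a b (phi : {ffun 'I_a.+1 -> 'I_b.+1}) : {ffun 'I_a.+1 -> 'I_b.+1} :=
  [ffun i => rev_ord (phi (rev_ord i))].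

Lemma monof_rflip a b (phi : {ffun 'I_a.+1 -> 'I_b.+1}) : monof phi -> monof (rflip phi).
Proof.
move=> hm i j hij; rewrite !ffunE /=.
have : phi (rev_ord j) <= phi (rev_ord i) by apply: hm; rewrite /=; lia.
have := ltn_ord (phi (rev_ord j)); have := ltn_ord (phi (rev_ord i)); lia.
Qed.

Lemma rflip_val a b (phi : {ffun 'I_a.+1 -> 'I_b.+1}) x : x <= a ->
  val (rflip phi (inord x)) = b - phi (inord (a - x)).
Proof.
move=> hx; rewrite ffunE /=.
have -> : rev_ord (inord x) = inord (a - x) :> 'I_a.+1.
  by apply: val_inj; rewrite /= !inordK; lia.
lia.
Qed.

Lemma revmap K s L : s + L <= K.+1 ->
  [seq K - z | z <- iota s L] = rev (iota (K.+1 - s - L) L).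
Proof.
elim: L s => [|L IH] s h /=; first by [].
rewrite IH; last by lia.
set t := K.+1 - s - L.+1.
have -> : t :: iota t.+1 L = iota t L ++ [:: t + L] by rewrite -[t :: _]/(iota t L.+1) -addn1 iotaD.
rewrite rev_cat /=; congr (_ :: rev (iota _ _)); rewrite /t; lia.
Qed.

Lemma nat_fl a b (phi : {ffun 'I_a.+1 -> 'I_b.+1}) i : monof phi -> i <= a ->
  [seq (b.+1 - z) %% b.+1 | z <- fl phi i] = rev (fl (rflip phi) ((a.+1 - i) %% a.+1)).
Proof.
move=> hm hi.
have mono : forall x y, x <= y -> y <= a -> phi (inord x) <= phi (inord y).
  by move=> x y hxy hy; apply: hm; rewrite !inordK //; lia.
have ltb : forall x, phi (inord x) <= b by move=> x; rewrite -ltnS ltn_ord.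
case: (posnP i) => [->|ip].
  rewrite subn0 modnn !fl_0 map_cat.
  rewrite !rflip_val // subnn subn0.
  have e1 : [seq (b.+1 - z) %% b.+1 | z <- iota (phi (inord a)).+1 (b - phi (inord a))]
      = rev (iota 1 (b - phi (inord a))).
    rewrite (_ : [seq _ | z <- _] = [seq b.+1 - z | z <- iota (phi (inord a)).+1 (b - phi (inord a))]).
      rewrite revmap; last by have := ltb a; lia.
      by congr (rev (iota _ _)); have := ltb a; lia.
    apply/eq_in_map => z; rewrite mem_iota => hz; rewrite modn_small //; lia.
  have e2 : [seq (b.+1 - z) %% b.+1 | z <- iota 0 (phi (inord 0)).+1]
      = 0 :: rev (iota (b.+1 - phi (inord 0)) (phi (inord 0))).
    rewrite [iota 0 _]/= /= subn0 modnn; congr (_ :: _).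
    rewrite (_ : [seq _ | z <- _] = [seq b.+1 - z | z <- iota 1 (phi (inord 0))]).
      rewrite revmap; last by have := ltb 0; lia.
      by congr (rev (iota _ _)); lia.
    apply/eq_in_map => z; rewrite mem_iota => hz; rewrite modn_small //; have := ltb 0; lia.
  rewrite e1 e2 rev_cat [iota 0 _]/= rev_cons cat_rcons.
  by congr (_ ++ _ :: rev (iota _ _)); have := ltb 0; lia.
have hj : (a.+1 - i) %% a.+1 = a.+1 - i by rewrite modn_small //; lia.
rewrite hj !fl_pos; try lia.
rewrite !rflip_val; try lia.
have -> : a - (a.+1 - i).-1 = i by lia.
have -> : a - (a.+1 - i) = i.-1 by lia.
have h1 := mono i.-1 i (leq_pred _) hi.
have h2 := ltb i.
rewrite (_ : [seq _ | z <- _] = [seq b.+1 - z | z <- iota (phi (inord i.-1)).+1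
                 (phi (inord i) - phi (inord i.-1))]).
  rewrite revmap; last by lia.
  by congr (rev (iota _ _)); lia.
apply/eq_in_map => z; rewrite mem_iota => hz; rewrite modn_small //; lia.
Qed.

Lemma nat_rho a b (phi : {ffun 'I_a.+1 -> 'I_b.+1}) : monof phi ->
  IFcomp (rho b) (P phi) = IFcomp (P (rflip phi)) (rho a).
Proof.
move=> hm.
have hm' := monof_rflip hm.
have fibE : iffib (IFcomp (rho b) (P phi)) = iffib (IFcomp (P (rflip phi)) (rho a)).
  apply/ffunP => i; rewrite /IFcomp /= ffunE.
  rewrite [RHS]ffunE natfib_rho /= cats0 !ffunE /star /=.
  rewrite (_ : [seq _ | j <- _] = [seq [:: rhomap j] | j <- [seq inord z | z <- fl phi i]]);
    last by apply: eq_map => j; rewrite natfib_rho ffunE.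
  rewrite flatten_map1 -map_rev rhomap_val -nat_fl //; last by rewrite -ltnS ltn_ord.
  rewrite -[LHS]map_comp -[RHS]map_comp; apply/eq_in_map => z hz /=.
  have hz' := fl_lt hz.
  by apply: val_inj; rewrite rhomap_val /= !inordK // ltn_pmod.
rewrite [LHS]IFhomE [RHS]IFhomE; congr IFHom => //.
  apply: IFmem_map fibE; apply: IFmem_comp; by [apply: rho_mem | apply: P_mem].
by apply/ffunP => k; rewrite !ffunE.
Qed.

Definition Phi n m (x : DRhom m n) : IFhom n m :=
  if drrev x then IFcomp (P (drphi x)) (rho m) else P (drphi x).
Arguments Phi : clear implicits.

Lemma Phi_comp n m p (x : DRhom n m) (y : DRhom m p) : DRvalid x -> DRvalid y ->
  Phi p n (DRcomp y x) = IFcomp (Phi p m y) (Phi m n x).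
Proof.
case: x => phi g; case: y => psi h; rewrite /DRvalid /= => hx hy.
have Pm : monof phi by [].
have Qm : monof psi by [].
rewrite /DRcomp /Phi /=; case: h => /=.
  have -> : [ffun i => psi (rev_ord (phi (rev_ord i)))] = [ffun i => psi (rflip phi i)].
    by apply/ffunP => i; rewrite !ffunE.
  have Fm := monof_rflip Pm.
  have Mr := @rho_mem m; have Mr' := @rho_mem n; have Mp := P_mem Pm; have Mf := P_mem Fm.
  rewrite P_comp //; case: g => /=.
    rewrite (IFcomp_assoc _ _ Mr) -(IFcomp_assoc _ _ Mp) nat_rho //.
    by rewrite (IFcomp_assoc _ _ Mr') rho_rho IFcomp_id_r.
  by rewrite (IFcomp_assoc _ _ Mr) nat_rho // -(IFcomp_assoc _ _ Mf).
rewrite P_comp //; case: g => //=.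
by rewrite (IFcomp_assoc _ _ (P_mem Pm)).
Qed.

Lemma IFid_mem n : IFmem (IFid n).
Proof. by move=> i j; rewrite /= !ffunE inE. Qed.

Lemma monof_id n : monof [ffun i : 'I_n.+1 => i].
Proof. by move=> i j; rewrite !ffunE. Qed.

Lemma P_id n : P [ffun i : 'I_n.+1 => i] = IFid n.
Proof.
have fibE : iffib (P [ffun i : 'I_n.+1 => i]) = iffib (IFid n).
  apply/ffunP => l; rewrite !ffunE.
  case: (posnP (l : nat)) => [l0|lp].
    rewrite l0 fl_0 !ffunE !inordK // subnn /=.
    by congr [:: _]; apply: val_inj; rewrite /= l0 inordK.
  rewrite fl_pos; last by rewrite lp -ltnS ltn_ord.
  rewrite !ffunE !inordK //; try (have := ltn_ord l; lia).
  rewrite (_ : l - l.-1 = 1); last by lia.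
  by rewrite /= prednK // inord_val.
rewrite [LHS]IFhomE [RHS]IFhomE; congr IFHom => //.
  by apply: IFmem_map fibE; [apply: P_mem; apply: monof_id | apply: IFid_mem].
Qed.

Lemma natfib_ext n m (f g : 'I_n.+1 -> 'I_m.+1) : f =1 g -> natfib f = natfib g.
Proof. by move=> e; apply/ffunP => l; rewrite !ffunE; apply: eq_filter => k; rewrite e. Qed.

Lemma filter_iota_range N s c : s + c <= N ->
  [seq z <- iota 0 N | s <= z < s + c] = iota s c.
Proof.
move=> h; rewrite (_ : N = s + (c + (N - s - c))); last by lia.
rewrite !iotaD !filter_cat add0n.
rewrite (@eq_in_filter _ _ pred0); last by move=> z; rewrite mem_iota /=; lia.
rewrite (@eq_in_filter _ _ predT (iota s c)); last by move=> z; rewrite mem_iota /=; lia.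
rewrite (@eq_in_filter _ _ pred0 (iota (s + c) _)); last by move=> z; rewrite mem_iota /=; lia.
have P0 : forall t : seq nat, [seq x <- t | pred0 x] = [::] by elim.
have PT : forall t : seq nat, [seq x <- t | predT x] = t by elim => //= x t ->.
by rewrite !P0 PT cats0.
Qed.

Lemma natfib_iota n m (f : 'I_n.+1 -> 'I_m.+1) l s c :
  (forall z, z < n.+1 -> (f (inord z) == l) = (s <= z < s + c)) -> s + c <= n.+1 ->
  natfib f l = map inord (iota s c).
Proof.
move=> hf hsc; apply: (inj_map val_inj).
rewrite -map_comp (_ : map _ (iota s c) = iota s c); last first.
  rewrite -[RHS]map_id; apply/eq_in_map => z; rewrite mem_iota => hz /=; rewrite inordK //; lia.
rewrite -(filter_iota_range hsc) /natfib ffunE.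
rewrite (@eq_filter _ _ (preim val (fun z => s <= z < s + c))); last first.
  by move=> k /=; rewrite -hf // inord_val.
by rewrite -filter_map val_enum_ord.
Qed.

Lemma P_natfib a b (phi : {ffun 'I_a.+1 -> 'I_b.+1}) (l : 'I_a.+1) s c :
  monof phi -> fl phi l = iota s c -> s + c <= b.+1 ->
  iffib (P phi) l = natfib (ifmap (P phi)) l.
Proof.
move=> hm e hsc; rewrite [LHS]ffunE e; symmetry; apply: natfib_iota => // z hz.
rewrite -(P_mem hm) /= ffunE mem_map_inord; last by move=> y; apply: fl_lt.
by rewrite /= inordK // e mem_iota.
Qed.

Lemma P_map a b (phi : {ffun 'I_a.+1 -> 'I_b.+1}) (f : 'I_b.+1 -> 'I_a.+1) :
  monof phi -> (forall j : 'I_b.+1, val j \in fl phi (f j)) -> ifmap (P phi) = [ffun j => f j].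
Proof.
move=> hm hf; apply/ffunP => j; rewrite !ffunE; apply: val_inj.
rewrite /= inordK; last by rewrite ltnS Pmapn_le.
apply/eqP; rewrite Pmapn_spec //; [exact: hf | by rewrite -ltnS].
Qed.

Lemma fl_iota a b (phi : {ffun 'I_a.+1 -> 'I_b.+1}) l : monof phi -> l <= a ->
  (0 < l \/ val (phi (inord a)) = b) -> exists s c, fl phi l = iota s c /\ s + c <= b.+1.
Proof.
move=> hm hl; have ltb : forall x, phi (inord x) <= b by move=> x; rewrite -ltnS ltn_ord.
case: (posnP l) => [->|lp] h.
  have e : val (phi (inord a)) = b by case: h.
  exists 0, (phi (inord 0)).+1; rewrite fl_0 e subnn /=; split => //.
  by rewrite ltnS.
exists (phi (inord l.-1)).+1, (phi (inord l) - phi (inord l.-1)); rewrite fl_pos; last by lia.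
split => //; have : phi (inord l.-1) <= phi (inord l) by apply: hm; rewrite !inordK; lia.
have := ltb l; lia.
Qed.

Lemma P_fib_natfib a b (phi : {ffun 'I_a.+1 -> 'I_b.+1}) (f : 'I_b.+1 -> 'I_a.+1) (l : 'I_a.+1) :
  monof phi -> ifmap (P phi) = [ffun j => f j] -> (0 < l \/ val (phi (inord a)) = b) ->
  iffib (P phi) l = natfib f l.
Proof.
move=> hm hf hl; have [s [c [e hsc]]] := fl_iota hm (ltn_ord l : (l : nat) <= a) hl.
rewrite (P_natfib hm e hsc) hf; congr (_ _ l); apply: natfib_ext => j; by rewrite ffunE.
Qed.

Section Delta.
Variables (k : nat) (i : 'I_k.+2).

Let phi : {ffun 'I_k.+1 -> 'I_k.+2} := drphi (delta i).

Lemma dval x : x <= k -> val (phi (inord x)) = bump i x.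
Proof. by move=> hx; rewrite /phi /= ffunE /= inordK. Qed.

Lemma delta_mono : monof phi.
Proof. by move=> x y hxy; rewrite /phi /= !ffunE /= /bump; lia. Qed.

Lemma ord_max_eq m (x : 'I_m.+1) : (x == ord_max) = ((x : nat) == m).
Proof. by rewrite -(inj_eq val_inj). Qed.

Lemma dmap_val j : (dmap i j : nat) =
  if (i : nat) == k.+1 then (if (j : nat) == k.+1 then 0 else (j : nat))
  else (if j <= i then (j : nat) else (j : nat).-1).
Proof.
have hj := ltn_ord j; have hi := ltn_ord i.
rewrite /dmap !ord_max_eq; case: eqP => ei.
  by case: eqP => ej //=; rewrite inordK //=; lia.
by case: ifP => hji; rewrite inordK //=; lia.
Qed.

Lemma delta_map : ifmap (P phi) = [ffun j => dmap i j].
Proof.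
apply: P_map; first exact: delta_mono.
move=> j; have hj := ltn_ord j; have hi := ltn_ord i.
rewrite fl_mem //; last by rewrite -ltnS ltn_ord.
have dl := ltn_ord (dmap i j).
rewrite dmap_val in dl *.
rewrite /=.
case E1: ((i : nat) == k.+1) dl => dl; move/eqP: E1 => E1.
  case E2: ((j : nat) == k.+1) dl => dl; move/eqP: E2 => E2.
    by rewrite eqxx dval // /bump; lia.
  by case: eqP => l0; rewrite !dval /bump; lia.
case E3: (j <= i) dl => dl.
  by case: eqP => l0; rewrite !dval /bump; lia.
by case: eqP => l0; rewrite !dval /bump; lia.
Qed.

Lemma P_delta : P phi = dface i.
Proof.
rewrite [LHS]IFhomE /dface delta_map; congr IFHom.
have hik := ltn_ord i.
case E: (i == ord_max); apply/ffunP => l.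
  rewrite ord_max_eq in E; move/eqP: E => ei.
  rewrite [RHS]ffunE; case E0: (l == ord0).
    move/eqP: E0 => ->; rewrite ffunE fl_0 !dval // /bump ei.
    rewrite (_ : (k.+1 <= k) + k = k); last by lia.
    rewrite (_ : (k.+1 <= 0) + 0 = 0); last by lia.
    rewrite subSnn /=.
    by congr [:: _; _]; apply: val_inj; rewrite /= inordK.
  apply: P_fib_natfib; [exact: delta_mono | exact: delta_map |].
  by left; rewrite lt0n; apply/negP => /eqP h; move/negP: E0; apply; apply/eqP/val_inj.
apply: P_fib_natfib; [exact: delta_mono | exact: delta_map |].
rewrite ord_max_eq in E; move/negbT/eqP: E => E.
by right; rewrite dval //= /bump; lia.
Qed.

End Delta.

Section Sigma.
Variables (n : nat) (j : 'I_n.+1).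

Let phi : {ffun 'I_n.+2 -> 'I_n.+1} := drphi (sigma j).

Lemma sval x : x <= n.+1 -> val (phi (inord x)) = unbump j x.
Proof.
move=> hx; rewrite /phi /= ffunE /= !inordK //; have := ltn_ord j; rewrite /unbump; lia.
Qed.

Lemma sigma_mono : monof phi.
Proof.
move=> x y hxy; rewrite -(inord_val x) -(inord_val y) !sval ?/unbump; try lia.
  by rewrite -ltnS ltn_ord.
by rewrite -ltnS ltn_ord.
Qed.

Lemma sigma_map : ifmap (P phi) = [ffun k => smap j k].
Proof.
apply: P_map; first exact: sigma_mono.
move=> k; have hj := ltn_ord j; have hk := ltn_ord k.
rewrite fl_mem //; last by rewrite -ltnS ltn_ord.
rewrite /smap /=.
case: eqP => [e|e].
  by rewrite !sval /unbump /=; move: e; rewrite /bump; lia.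
by rewrite !sval /unbump /=; move: e; rewrite /bump; try lia.
Qed.

Lemma P_sigma : P phi = sdeg j.
Proof.
rewrite [LHS]IFhomE /sdeg sigma_map; congr IFHom.
apply/ffunP => l; apply: P_fib_natfib; [exact: sigma_mono | exact: sigma_map |].
by right; rewrite sval // /unbump; have := ltn_ord j; lia.
Qed.

End Sigma.

Lemma Phi_valid n m (x : DRhom m n) : DRvalid x -> IGvalid (Phi n m x).
Proof.
case: x => phi g; rewrite /DRvalid /= => hm.
have hm' : monof phi by [].
rewrite /Phi /=; case: g.
  split.
    move=> i; split; last by move=> j; apply: IFmem_comp; [apply: P_mem | apply: rho_mem].
    rewrite /IFcomp /= ffunE natfib_rho /= ffunE cats0 /star rev_uniq.
    exact: P_uniq.
  rewrite /IFcomp /= !ffunE Pmapn0.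
  by rewrite (_ : inord 0 = ord0) ?/rhomap ?eqxx //; apply: val_inj; rewrite /= inordK.
split.
  by move=> i; split; [apply: P_uniq | move=> j; apply: P_mem].
by rewrite /= ffunE Pmapn0; apply: val_inj; rewrite /= inordK.
Qed.

Lemma last_iota x s n : last x (iota s n.+1) = s + n.
Proof. by rewrite -addn1 iotaD last_cat. Qed.

Lemma map_val_inord n (s : seq nat) : (forall z, z \in s -> z < n.+1) ->
  map val (map (@inord n) s) = s.
Proof.
move=> h; rewrite -map_comp -[RHS]map_id; apply/eq_in_map => z hz /=.
by rewrite inordK // h.
Qed.

Lemma P_inj a b (phi psi : {ffun 'I_a.+1 -> 'I_b.+1}) : monof phi -> monof psi ->
  P phi = P psi -> phi = psi.
Proof.
move=> h1 h2 E.
have flE : forall l, l <= a -> fl phi l = fl psi l.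
  move=> l hl; have := congr1 (fun f => iffib f (inord l)) E; rewrite /= !ffunE inordK //.
  by move/(congr1 (map val)); rewrite !map_val_inord // => z; apply: fl_lt.
have E0 : val (phi (inord 0)) = psi (inord 0).
  have := congr1 (last 0) (flE 0 (leq0n _)); by rewrite !fl_0 !last_cat !last_iota.
have key : forall l, l <= a -> val (phi (inord l)) = psi (inord l).
  elim => [|l IH] hl //.
  have := congr1 size (flE l.+1 hl); rewrite !fl_pos // !size_iota /= IH; last by lia.
  have : phi (inord l) <= phi (inord l.+1) by apply: h1; rewrite !inordK //; lia.
  have : psi (inord l) <= psi (inord l.+1) by apply: h2; rewrite !inordK //; lia.
  rewrite IH; last by lia.
  lia.
apply/ffunP => x; apply: val_inj; rewrite -(inord_val x); apply: key.
by rewrite -ltnS ltn_ord.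
Qed.

Lemma Phi_faithful n m (x x' : DRhom m n) : DRvalid x -> DRvalid x' ->
  Phi n m x = Phi n m x' -> x = x'.
Proof.
case: x => phi g; case: x' => phi' g'; rewrite /DRvalid /= => h1 h2.
have m1 : monof phi by []. have m2 : monof phi' by [].
rewrite /Phi /=; case: g; case: g' => E.
- congr DRHom; apply: P_inj => //.
  have := congr1 (fun f => IFcomp f (rho m)) E.
  by rewrite !(IFcomp_assoc _ _ (@rho_mem m)) rho_rho !IFcomp_id_r.
- by have := congr1 (fun f => iflab f ord0) E; rewrite /= !ffunE.
- by have := congr1 (fun f => iflab f ord0) E; rewrite /= !ffunE.
- by congr DRHom; apply: P_inj.
Qed.

Lemma DRcomp_valid n m p (x : DRhom n m) (y : DRhom m p) :
  DRvalid x -> DRvalid y -> DRvalid (DRcomp y x).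
Proof.
case: x => phi g; case: y => psi h; rewrite /DRvalid /DRcomp /= => hx hy.
case: h => /=.
  move=> i j hij; rewrite !ffunE; apply: hy.
  by have := monof_rflip hx hij; rewrite !ffunE.
by move=> i j hij; rewrite !ffunE; apply/hy/hx.
Qed.

Lemma noncollapse a b
  (IH : forall b' (psi : {ffun 'I_a.+1 -> 'I_b'.+1}), b' < b -> monof psi -> Rgen (P psi))
  (phi : {ffun 'I_a.+1 -> 'I_b.+1}) :
  monof phi -> (forall k, k < a -> phi (inord k) < phi (inord k.+1)) -> Rgen (P phi).
Proof.
move=> hm hs.
have mono : forall x y, x <= y -> y <= a -> phi (inord x) <= phi (inord y).
  by move=> x y hxy hy; apply: hm; rewrite !inordK //; lia.
case: (boolP [exists y : 'I_b.+1, [forall x : 'I_a.+1, phi x != y]]).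
  case/existsP => y /forallP hy.
  case: b IH phi hm hs mono y hy => [|b] IH phi hm hs mono y hy.
    by have := hy ord0; rewrite (ord1 (phi ord0)) (ord1 y) eqxx.
  have ne : forall x, nat_of_ord (phi x) != nat_of_ord y by move=> x; rewrite (inj_eq val_inj) hy.
  pose phi2 := [ffun x => inord (unbump y (phi x)) : 'I_b.+1].
  have v2 : forall x, nat_of_ord (phi2 x) = unbump y (phi x).
    move=> x; rewrite ffunE /= inordK //; have := ne x; have := ltn_ord (phi x);
    have := ltn_ord y; rewrite /unbump; lia.
  clearbody phi2.
  have m2 : monof phi2.
    move=> u v huv; rewrite !v2; have := hm u v huv; rewrite /unbump; lia.
  have e : phi = [ffun x => drphi (delta y) (phi2 x)].
    apply/ffunP => x; rewrite !ffunE; apply: val_inj; rewrite /= v2.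
    have := ne x; rewrite /bump /unbump; lia.
  rewrite e P_comp //; last exact: delta_mono.
  rewrite P_delta; apply: Rgen_comp; first exact: Rgen_d.
  by apply: IH.
move/existsPn => hall.
have surj : forall y : 'I_b.+1, exists x : 'I_a.+1, nat_of_ord (phi x) = nat_of_ord y.
  move=> y; move: (hall y); rewrite negb_forall => /existsP [x]; rewrite negbK => /eqP hx.
  by exists x; rewrite hx.
have z0 : nat_of_ord (phi (inord 0)) = 0.
  have [x hx] := surj ord0; have := mono 0 x (leq0n _); rewrite -(ltnS x) ltn_ord inord_val hx.
  by move=> /(_ isT) /=; lia.
have step : forall k, k < a -> nat_of_ord (phi (inord k.+1)) = (phi (inord k)).+1.
  move=> k hk; have h1 := hs k hk; have h2 := ltn_ord (phi (inord k.+1)).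
  have [x hx] := surj (inord (phi (inord k)).+1).
  rewrite inordK in hx; last by lia.
  have hxa : (x : nat) <= a by rewrite -ltnS ltn_ord.
  case: (leqP (x : nat) k) => hxk.
    by have := mono x k hxk (ltnW hk); rewrite inord_val hx; lia.
  by have := mono k.+1 x hxk hxa; rewrite inord_val hx; lia.
have idk : forall k, k <= a -> nat_of_ord (phi (inord k)) = k.
  elim => [|k IHk] hk //; rewrite step //; rewrite IHk //; lia.
have top : nat_of_ord (phi (inord a)) = b.
  have [x hx] := surj ord_max; have := mono x a; rewrite -(ltnS x) ltn_ord inord_val hx.
  by move=> /(_ isT (leqnn _)) /=; have := ltn_ord (phi (inord a)); lia.
have eab : b = a by rewrite -top idk.
subst b.
have -> : phi = [ffun i => i].
  apply/ffunP => x; apply: val_inj; rewrite ffunE /= -[in LHS](inord_val x) idk //.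
  by rewrite -ltnS ltn_ord.
rewrite P_id; exact: Rgen_id.
Qed.

Lemma decomp s : forall a b (phi : {ffun 'I_a.+1 -> 'I_b.+1}), a + b < s -> monof phi ->
  Rgen (P phi).
Proof.
elim: s => [|s IH] a b phi hs hm; first by [].
case: a phi hs hm => [|a] phi hs hm.
  apply: noncollapse => //; idtac.
  by move=> b' psi hb' hpsi; apply: IH => //; lia.
case: (boolP [exists j : 'I_a.+1, phi (inord j) == phi (inord j.+1)]).
  case/existsP => j /eqP ej.
  have hj := ltn_ord j.
  pose phi2 := [ffun k : 'I_a.+1 => phi (inord (bump j.+1 k))].
  have m2 : monof phi2.
    move=> u v huv; rewrite !ffunE; apply: hm; have hu := ltn_ord u; have hv := ltn_ord v.
    rewrite !inordK /bump; lia.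
  have e : phi = [ffun k => phi2 (drphi (sigma j) k)].
    apply/ffunP => k; rewrite !ffunE.
    have hk := ltn_ord k.
    rewrite inordK; last by rewrite /unbump; lia.
    have [kj|kj] := eqVneq (k : nat) j.+1.
      rewrite (_ : bump j.+1 (unbump j k) = j); last by rewrite /bump /unbump; lia.
      by rewrite ej -kj inord_val.
    rewrite (_ : bump j.+1 (unbump j k) = k) ?inord_val //.
    by rewrite /bump /unbump; move: kj; lia.
  rewrite e P_comp //; last exact: sigma_mono.
  rewrite P_sigma; apply: Rgen_comp; last exact: Rgen_s.
  by apply: IH => //; lia.
move/existsPn => hnc.
apply: noncollapse => //.
  by move=> b' psi hb' hpsi; apply: IH => //; lia.
move=> k hk; have := hnc (inord k); rewrite inordK //.
have : phi (inord k) <= phi (inord k.+1) by apply: hm; rewrite !inordK //; lia.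
by move=> h1 h2; rewrite ltn_neqAle h1 andbT.
Qed.

Theorem mainTheorem4 :
  exists Phi : forall n m : nat, DRhom m n -> IFhom n m,
    (* Phi lands in IΓ(as) *)
    (forall n m (x : DRhom m n), DRvalid x -> IGvalid (Phi n m x)) /\
    (* Phi is a (contravariant) functor, identity on objects *)
    (forall n, Phi n n (DRid n) = IFid n) /\
    (forall n m p (x : DRhom n m) (y : DRhom m p), DRvalid x -> DRvalid y ->
       Phi p n (DRcomp y x) = IFcomp (Phi p m y) (Phi m n x)) /\
    (* faithful *)
    (forall n m (x x' : DRhom m n), DRvalid x -> DRvalid x' ->
       Phi n m x = Phi n m x' -> x = x') /\
    (* values on generators *)
    (forall k (i : 'I_k.+2), Phi k.+1 k (delta i) = dface i) /\
    (forall n (j : 'I_n.+1), Phi n n.+1 (sigma j) = sdeg j) /\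
    (forall n, Phi n n (refl n) = rho n) /\
    (* the image of Phi is exactly the subcategory R generated by d_i, s_j, rho_n *)
    (forall n m (h : IFhom n m), Rgen h <-> exists x, DRvalid x /\ Phi n m x = h).
Proof.
exists Phi.
have Pid : forall n, Phi n n (DRid n) = IFid n by move=> n; exact: P_id.
have Prefl : forall n, Phi n n (refl n) = rho n.
  by move=> n; rewrite /Phi /= P_id IFcomp_id_l.
have Pd : forall k (i : 'I_k.+2), Phi k.+1 k (delta i) = dface i.
  by move=> k i; exact: P_delta.
have Ps : forall n (j : 'I_n.+1), Phi n n.+1 (sigma j) = sdeg j.
  by move=> n j; exact: P_sigma.
split; first exact: Phi_valid.
split; first exact: Pid.
split; first exact: Phi_comp.
split; first exact: Phi_faithful.
split; first exact: Pd.
split; first exact: Ps.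
split; first exact: Prefl.
move=> n m h; split.
  elim => {n m h}.
  - by move=> n; exists (DRid n); split; [exact: monof_id | exact: Pid].
  - by move=> k i; exists (delta i); split; [exact: delta_mono | exact: Pd].
  - by move=> n j; exists (sigma j); split; [exact: sigma_mono | exact: Ps].
  - by move=> n; exists (refl n); split; [exact: monof_id | exact: Prefl].
  - move=> n m p f g _ [xf [vf ef]] _ [xg [vg eg]].
    exists (DRcomp xf xg); split; first exact: DRcomp_valid.
    by rewrite Phi_comp // ef eg.
case=> x [vx <-]; case: x vx => phi g vx.
have hm : monof phi by [].
have R : Rgen (P phi) by apply: (@decomp (m + n).+1).
rewrite /Phi /=; case: g vx => // _.
by apply: Rgen_comp => //; exact: Rgen_rho.
Qed.
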